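(* Let $k\geq3$, $A=\{0,1,\dots,k-1\}$, $N=k-1$ and let $T\colon A^{N^2}\to A$ be given by $T(x_{1,1},\dots,x_{1,N},\dots,x_{N,1},\dots,x_{N,N})=1$ if $x_{i,j}=i$ for all $i,j$ or $x_{i,j}=j$ for all $i,j$, and $0$ otherwise. Then \[\langle\{T\}\rangle\subseteq\{T\}^{**}\subseteq\{T\}^{*(1)*}\subseteq\mathrm{Pol}\bigl(\{U\subseteq A: 0\in U\}\bigr)\cap\mathrm{Pol}\bigl(\{\theta\in\mathrm{Eq}(A): (0,1)\in\theta\}\bigr),\] where $\mathrm{Eq}(A)$ denotes the set of all equivalence relations on $A$.
   Context: An $m$-ary $g$ commutes with an $n$-ary $h$ if $g\bigl((h((x_{ij})_{j}))_{i}\bigr)=h\bigl((g((x_{ij})_{i}))_{j}\bigr)$ for all $(x_{ij})\in A^{m\times n}$. For a set $F$ of finitary operations on $A$ (positive arity), $F^*$ is the set of all such operations commuting with every member of $F$; superscripts apply left to right, so $\{T\}^{**}=(\{T\}^* )^*$ and $\{T\}^{*(1)*}=((\{T\}^* )^{(1)})^*$, where $G^{(1)}$ is the set of unary members of $G$. $\langle\{T\}\rangle$ is the clone generated by $T$. For a set $Q$ of relations on $A$, $\mathrm{Pol}(Q)$ is the set of finitary operations preserving every relation in $Q$ (unary relations $U$ and binary relations $\theta$ are viewed as relations of arity 1 and 2). *)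

(* Defs.v *)
From mathcomp Require Import all_boot.
Set Implicit Arguments. Unset Strict Implicit. Unset Printing Implicit Defensive.

Record op (A : Type) := Op {
  arity : nat;
  arity_pos : 0 < arity;
  opfun :> ('I_arity -> A) -> A }.

Definition opset (A : Type) := op A -> Prop.

Definition subset_ops A (F G : opset A) := forall f, F f -> G f.

Definition inter_ops A (F G : opset A) : opset A := fun f => F f /\ G f.

Definition commutes A (g h : op A) : Prop :=
  forall x : 'I_(arity g) -> 'I_(arity h) -> A,
    g (fun i => h (fun j => x i j)) = h (fun j => g (fun i => x i j)).

Definition centralizer A (F : opset A) : opset A :=
  fun g => forall h, F h -> commutes g h.

Definition unary_part A (G : opset A) : opset A :=
  fun f => G f /\ arity f = 1.

Definition singleton_op A (T : op A) : opset A := fun f => f = T.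

Inductive clone_gen A (F : opset A) : op A -> Prop :=
| cg_base f : F f -> clone_gen F f
| cg_proj n (hn : 0 < n) (i : 'I_n) : clone_gen F (@Op A n hn (fun x => x i))
| cg_comp (f : op A) n (hn : 0 < n) (gs : 'I_(arity f) -> ('I_n -> A) -> A) :
    clone_gen F f -> (forall i, clone_gen F (@Op A n hn (gs i))) ->
    clone_gen F (@Op A n hn (fun x => f (fun i => gs i x))).

Definition preserves_set A (U : A -> Prop) (f : op A) : Prop :=
  forall x : 'I_(arity f) -> A, (forall i, U (x i)) -> U (f x).

Definition preserves_rel A (th : A -> A -> Prop) (f : op A) : Prop :=
  forall x y : 'I_(arity f) -> A, (forall i, th (x i) (y i)) -> th (f x) (f y).

Definition is_equivalence A (th : A -> A -> Prop) : Prop :=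
  (forall a, th a a) /\ (forall a b, th a b -> th b a) /\
  (forall a b c, th a b -> th b c -> th a c).

Definition Pol_sets A (Q : (A -> Prop) -> Prop) : opset A :=
  fun f => forall U, Q U -> preserves_set U f.

Definition Pol_rels A (Q : (A -> A -> Prop) -> Prop) : opset A :=
  fun f => forall th, Q th -> preserves_rel th f.

Lemma lt0k k : 2 < k -> 0 < k. Proof. by case: k. Qed.
Lemma lt1k k : 2 < k -> 1 < k. Proof. by case: k => // -[]. Qed.
Definition zeroA k (hk : 2 < k) : 'I_k := Ordinal (lt0k hk).
Definition oneA k (hk : 2 < k) : 'I_k := Ordinal (lt1k hk).

Lemma NN_pos k : 2 < k -> 0 < k.-1 * k.-1.
Proof. by case: k => // -[] // -[] // n _; rewrite muln_gt0. Qed.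

(* T : A^(N^2) -> A with N = k-1.  The argument position p (0-based) of the
   listing x_{1,1},...,x_{1,N},...,x_{N,1},...,x_{N,N} corresponds to
   i = p %/ N + 1, j = p %% N + 1. *)
Definition T_op k (hk : 2 < k) : op 'I_k :=
  @Op _ (k.-1 * k.-1) (NN_pos hk) (fun x =>
    if [forall p, nat_of_ord (x p) == p %/ k.-1 + 1]
       || [forall p, nat_of_ord (x p) == p %% k.-1 + 1]
    then oneA hk else zeroA hk).

(* Main.v *)
Require Import Defs.
From mathcomp Require Import all_boot.
From mathcomp Require Import zify.
From Stdlib Require Import ClassicalEpsilon FunctionalExtensionality.
Set Implicit Arguments. Unset Strict Implicit.

Lemma commutes_sym A (g h : op A) : commutes g h -> commutes h g.
Proof. move=> H x. exact: (esym (H (fun i j => x j i))). Qed.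

Definition un A (g : A -> A) : op A := @Op A 1 (ltn0Sn 0) (fun x => g (x ord0)).

Lemma surj_noninj k (g : 'I_k -> 'I_k) (a b : 'I_k) :
  (forall v, exists c, g c = v) -> g a = g b -> a = b.
Proof.
move=> hs gab.
have hc : #|image g 'I_k| == #|'I_k|.
  rewrite eqn_leq leq_image_card /=; apply: subset_leq_card; apply/subsetP=> v _.
  by have [c <-] := hs v; apply: image_f.
by move/image_injP: hc => /(_ a b isT isT gab).
Qed.

Lemma not_pattern k (hk : 2 < k) (g : 'I_k -> 'I_k) (y : 'I_(k.-1*k.-1) -> 'I_k) :
  g (zeroA hk) = zeroA hk -> g (oneA hk) = zeroA hk ->
  ([forall p, nat_of_ord (g (y p)) == p %/ k.-1 + 1]
       || [forall p, nat_of_ord (g (y p)) == p %% k.-1 + 1]) = false.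
Proof.
move=> g0 g1.
have hN : 0 < k.-1 by case: k hk {g y g0 g1} => // -[].
have key : (forall v, v != zeroA hk -> exists c, g c = v) -> False.
  move=> hs.
  have : zeroA hk = oneA hk.
    apply: (@surj_noninj k g); last by rewrite g0 g1.
    move=> v; case: (eqVneq v (zeroA hk)) => [->|]; first by exists (zeroA hk).
    exact: hs.
  by move/(congr1 val).
apply/negbTE; rewrite negb_or; apply/andP; split; apply/negP => /forallP hp;
  apply: key => v hv.
- have hv0 : 0 < v by rewrite lt0n; apply: contra hv => /eqP h; apply/eqP/val_inj.
  have hp' : (v.-1 * k.-1 < k.-1 * k.-1).
    rewrite ltn_mul2r hN /=; have := ltn_ord v; lia.
  exists (y (Ordinal hp')); apply: val_inj => /=.
  move/eqP: (hp (Ordinal hp')) => /= ->.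
  by rewrite mulnK // addn1 prednK.
- have hv0 : 0 < v by rewrite lt0n; apply: contra hv => /eqP h; apply/eqP/val_inj.
  have hlt : v.-1 < k.-1.
    have := ltn_ord v; lia.
  have hp' : (v.-1 < k.-1 * k.-1).
    by apply: (leq_trans hlt); rewrite leq_pmulr.
  exists (y (Ordinal hp')); apply: val_inj => /=.
  move/eqP: (hp (Ordinal hp')) => /= ->.
  by rewrite modn_small // addn1 prednK.
Qed.

Lemma un_comm_T k (hk : 2 < k) (g : 'I_k -> 'I_k) :
  g (zeroA hk) = zeroA hk -> g (oneA hk) = zeroA hk -> commutes (un g) (T_op hk).
Proof.
move=> g0 g1 x /=; rewrite not_pattern //; by case: ifP.
Qed.

Theorem lemma3p5 (k : nat) (hk : 2 < k) :
  let T := singleton_op (T_op hk) in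
  subset_ops (clone_gen T) (centralizer (centralizer T)) /\
  subset_ops (centralizer (centralizer T))
             (centralizer (unary_part (centralizer T))) /\
  subset_ops (centralizer (unary_part (centralizer T)))
    (inter_ops
       (Pol_sets (fun U : 'I_k -> Prop => U (zeroA hk)))
       (Pol_rels (fun th : 'I_k -> 'I_k -> Prop =>
                    is_equivalence th /\ th (zeroA hk) (oneA hk)))).
Proof.
move=> T; split; [|split].
- move=> f; elim => {f}.
  + move=> f -> h hh; apply: commutes_sym; exact: hh.
  + by move=> n hn i h _ x.
  + move=> f n hn gs _ IHf _ IHg h hh x /=.
    have e : (fun i => gs i (fun i' => h (fun j => x i' j)))
           = (fun i => h (fun j => gs i (fun i' => x i' j))).
      by apply: functional_extensionality => i; exact: (IHg i h hh x).
    rewrite e; exact: (IHf h hh (fun i j => gs i (fun i' => x i' j))).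
- move=> f hf h [hh _]; exact: hf.
- move=> f hf.
  have key : forall g : 'I_k -> 'I_k, g (zeroA hk) = zeroA hk -> g (oneA hk) = zeroA hk ->
      forall y, f (fun i => g (y i)) = g (f y).
    move=> g g0 g1 y.
    have hu : unary_part (centralizer T) (un g).
      by split => // h ->; apply: un_comm_T.
    exact: (hf _ hu (fun i _ => y i)).
  split.
  + move=> U U0 x hx.
    case: (eqVneq (f x) (zeroA hk)) => [->//|hb0].
    case: (eqVneq (f x) (oneA hk)) => [hb1|hb1].
    * case: (boolP [exists i, x i == oneA hk]) => [/existsP [i /eqP hi]|hn].
        by rewrite hb1 -hi.
      have := key (fun a => if a == oneA hk then zeroA hk else a) erefl.
      rewrite eqxx => /(_ erefl x).
      have -> : (fun i => if x i == oneA hk then zeroA hk else x i) = x.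
        apply: functional_extensionality => i.
        case: ifP => // /eqP hi; exfalso; move/negP: hn; apply; apply/existsP.
        by exists i; rewrite hi.
      by rewrite hb1 eqxx => /(congr1 val).
    * set b := f x in hb0 hb1 *.
      case: (boolP [exists i, x i == b]) => [/existsP [i /eqP hi]|hn].
        by rewrite -hi.
      have := key (fun a => if a == b then a else zeroA hk).
      rewrite eq_sym (negbTE hb0) [oneA hk == b]eq_sym (negbTE hb1) => /(_ erefl erefl x).
      have -> : (fun i => if x i == b then x i else zeroA hk) = (fun i => (fun _ => zeroA hk) (x i)).
        apply: functional_extensionality => i.
        case: ifP => // /eqP hi; exfalso; move/negP: hn; apply; apply/existsP.
        by exists i; rewrite hi.
      rewrite (key (fun _ => zeroA hk) erefl erefl x) /= eqxx => h.
      by rewrite /b -h eqxx in hb0.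
  + move=> th [[thr [ths tht]] th01] x y hxy.
    pose P a b := if excluded_middle_informative (th a b) then true else false.
    have PP : forall a b, P a b = true <-> th a b.
      by move=> a b; rewrite /P; case: excluded_middle_informative.
    pose u a := if P a (zeroA hk) then zeroA hk else odflt (zeroA hk) (pick (P a)).
    have u0 : u (zeroA hk) = zeroA hk by rewrite /u (proj2 (PP _ _) (thr _)).
    have u1 : u (oneA hk) = zeroA hk by rewrite /u (proj2 (PP _ _) (ths _ _ th01)).
    have ueq : forall a a', th a a' -> u a = u a'.
      move=> a a' haa.
      have hP : P a =1 P a'.
        move=> b; apply/idP/idP => /PP h; apply/PP.
          by apply: tht (ths _ _ haa) h.
        by apply: tht haa h.
      by rewrite /u (eq_pick hP) (hP (zeroA hk)).
    have urep : forall a, th a (u a).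
      move=> a; rewrite /u; case: ifP => [/PP //|_].
      case: pickP => [b /PP //|/(_ a)]; by rewrite (proj2 (PP _ _) (thr a)).
    have e : (fun i => u (x i)) = (fun i => u (y i)).
      by apply: functional_extensionality => i; apply: ueq.
    have := key u u0 u1 x; rewrite e key // => hu.
    apply: tht (urep _) _; rewrite -hu; apply: ths; exact: urep.
Qed.
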